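(* Let $D=(V,A)$ be a digraph, $k\in\mathbb{N}$, and $\mathcal{B}_i=(V_i,A_i)$ $(i<k)$ pairwise edge-disjoint branchings in $D$ such that for every nonempty $X\subseteq V$, $\varrho_{D\setminus\!\setminus\mathcal{B}}(X)\geq|\{i<k:V_i\cap X=\varnothing\}|$. Then for every $w\in V$ there is a system of pairwise edge-disjoint paths $\{P_i\}_{i<k}$ in $D\setminus\!\setminus\mathcal{B}$ such that $P_i$ goes from $V_i$ to $w$ for each $i<k$.
   Context: Digraphs may be of arbitrary cardinality with multiple edges. A branching is a digraph whose weakly connected components are arborescences (directed trees in which every vertex is reachable from the root). $D\setminus\!\setminus\mathcal{B}=(V,A\setminus\bigcup_{i<k}A_i)$. $\varrho_H(X)$ is the cardinality of the set of edges of $H$ with tail outside $X$ and head in $X$. Paths are directed simple paths; a path $P$ goes from $X$ to $Y$ if $V(P)\cap X=\{\mathrm{start}(P)\}$ and $V(P)\cap Y=\{\mathrm{end}(P)\}$ (start and end may coincide). *)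

(* Defs.v *)
(* Digraphs of arbitrary cardinality with multiple edges:
   a vertex type V, an edge type A, and tail/head maps A -> V. *)
From Stdlib Require Import List Arith Relations ClassicalEpsilon.
Import ListNotations.
Set Implicit Arguments.

Section Digraph.
Context {V A : Type} (tail head : A -> V).

Fixpoint walk (arcs : A -> Prop) (s : V) (es : list A) (t : V) : Prop :=
  match es with
  | [] => s = t
  | e :: es' => arcs e /\ tail e = s /\ walk arcs (head e) es' t
  end.

Definition pverts (s : V) (es : list A) : list V := s :: map head es.

Definition is_path (arcs : A -> Prop) (s : V) (es : list A) (t : V) : Prop :=
  walk arcs s es t /\ NoDup (pverts s es).

Definition joins (a : A) (x y : V) : Prop :=
  (tail a = x /\ head a = y) \/ (tail a = y /\ head a = x).

Definition wadj (AB : A -> Prop) (x y : V) : Prop :=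
  exists a, AB a /\ joins a x y.

Definition wconn (AB : A -> Prop) : V -> V -> Prop := clos_refl_trans V (wadj AB).

(* an undirected cycle of the underlying multigraph of (_, AB):
   distinct edges e_0..e_{n-1}, distinct vertices v_0..v_{n-1} (n >= 1),
   e_j joins v_j and v_{j+1 mod n}  (n = 1: loop, n = 2: parallel edges) *)
Definition ucycle (AB : A -> Prop) (es : list A) (vs : list V) : Prop :=
  es <> [] /\ length es = length vs /\ NoDup es /\ NoDup vs /\
  (forall a, In a es -> AB a) /\
  (forall j a x y, nth_error es j = Some a -> nth_error vs j = Some x ->
     nth_error vs (S j mod length vs) = Some y -> joins a x y).

(* (VB, AB) is a branching: a subdigraph whose weakly connected components are
   arborescences, i.e. trees (underlying multigraph connected and acyclic) with a
   root from which every vertex of the component is reachable by a directed path. *)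
Definition is_branching (VB : V -> Prop) (AB : A -> Prop) : Prop :=
  (forall a, AB a -> VB (tail a) /\ VB (head a)) /\
  (forall es vs, ~ ucycle AB es vs) /\
  (forall x, VB x -> exists r, wconn AB x r /\
       forall y, wconn AB r y -> exists es, is_path AB r es y).

(* rho_H(X) >= m, with H given by arc set [arcs]: there are at least m distinct
   arcs of H with tail outside X and head in X *)
Definition indeg_ge (arcs : A -> Prop) (X : V -> Prop) (m : nat) : Prop :=
  exists l : list A, NoDup l /\ length l = m /\
    forall a, In a l -> arcs a /\ ~ X (tail a) /\ X (head a).

End Digraph.

Definition count_missing {V : Type} (k : nat) (Vs : nat -> V -> Prop) (X : V -> Prop) : nat :=
  length (filter (fun i => if excluded_middle_informative (forall v, Vs i v -> ~ X v)
                           then true else false) (seq 0 k)).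

(* Main.v *)
Require Import Defs.
From Stdlib Require Import List Arith Lia Classical ClassicalEpsilon.
Import ListNotations.

Definition ind (P : Prop) : nat := if excluded_middle_informative P then 1 else 0.
Definition dec (P : Prop) : bool := if excluded_middle_informative P then true else false.

Fixpoint cnt {X : Type} (P : X -> Prop) (l : list X) : nat :=
  match l with [] => 0 | a :: l' => ind (P a) + cnt P l' end.

Lemma ind_T (P : Prop) : P -> ind P = 1.
Proof. intro H. unfold ind. destruct (excluded_middle_informative P); tauto. Qed.
Lemma ind_F (P : Prop) : ~ P -> ind P = 0.
Proof. intro H. unfold ind. destruct (excluded_middle_informative P); tauto. Qed.
Lemma ind_le1 (P : Prop) : ind P <= 1.
Proof. unfold ind. destruct (excluded_middle_informative P); lia. Qed.
Lemma dec_true (P : Prop) : dec P = true <-> P.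
Proof. unfold dec. destruct (excluded_middle_informative P); split; congruence || tauto. Qed.

Lemma cnt_app {X} (P : X -> Prop) l1 l2 : cnt P (l1 ++ l2) = cnt P l1 + cnt P l2.
Proof. induction l1; simpl; lia. Qed.

Lemma filter_cnt {X} (P : X -> Prop) l :
  length (filter (fun x => if excluded_middle_informative (P x) then true else false) l) = cnt P l.
Proof. induction l as [|a l IH]; simpl; auto. unfold ind.
  destruct (excluded_middle_informative (P a)); simpl; lia. Qed.

Lemma cnt_True {X} (l : list X) : cnt (fun _ => True) l = length l.
Proof. induction l; simpl; auto. rewrite ind_T; auto. Qed.

Lemma cnt_pos {X} (P : X -> Prop) l : 1 <= cnt P l -> exists x, In x l /\ P x.
Proof. induction l as [|a l IH]; simpl; intro H. lia.
  destruct (classic (P a)). exists a; auto.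
  rewrite ind_F in H; auto. destruct (IH H) as [x [? ?]]; eauto. Qed.

Lemma cnt_pos_of {X} (P : X -> Prop) l x : In x l -> P x -> 1 <= cnt P l.
Proof. induction l as [|a l IH]; simpl; intros H Hp. destruct H.
  destruct H. subst. rewrite ind_T; auto. lia. specialize (IH H Hp). lia. Qed.

Lemma NoDup_len_cnt {X} (P : X -> Prop) l m :
  NoDup l -> (forall a, In a l -> In a m /\ P a) -> length l <= cnt P m.
Proof. intros Hn H. rewrite <- filter_cnt. apply NoDup_incl_length; auto.
  intros a Ha. apply filter_In. destruct (H a Ha). split; auto.
  destruct (excluded_middle_informative (P a)); tauto. Qed.

Lemma NoDup_remove' {X} (d : forall x y : X, {x=y}+{x<>y}) x l : NoDup l -> NoDup (remove d x l).
Proof. induction l as [|a l IH]; simpl; intro H; auto. inversion H; subst.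
  destruct (d x a). auto. constructor; auto. intro Hi. apply in_remove in Hi. tauto. Qed.

Lemma cnt_remove {X} (d : forall x y : X, {x=y}+{x<>y}) (P : X -> Prop) l e :
  NoDup l -> In e l -> cnt P l = cnt P (remove d e l) + ind (P e).
Proof. induction l as [|a l IH]; simpl; intros Hn Hi. destruct Hi.
  inversion Hn; subst. destruct (d e a).
  - subst. rewrite notin_remove; auto. lia.
  - destruct Hi. congruence. simpl. rewrite (IH H2 H). lia. Qed.

Lemma NoDup_app_disj {X} (l1 l2 : list X) a : NoDup (l1 ++ l2) -> In a l1 -> In a l2 -> False.
Proof. induction l1 as [|b l1 IH]; simpl; intros Hn H1 H2. auto.
  inversion Hn; subst. destruct H1. subst. apply H3. apply in_or_app; auto. eauto. Qed.

Lemma remove_all {X} (d : forall x y : X, {x=y}+{x<>y}) (T F : list X) :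
  NoDup F -> NoDup T -> incl T F ->
  exists F', NoDup F' /\ (forall a, In a F' <-> In a F /\ ~ In a T) /\
     forall P, cnt P F = cnt P F' + cnt P T.
Proof. revert F. induction T as [|t T IH]; intros F HF HT Hi.
  - exists F. split; auto. split. intro a; simpl; tauto. intro; simpl; lia.
  - inversion HT; subst.
    destruct (IH (remove d t F)) as [F' [K1 [K2 K3]]]; auto. apply NoDup_remove'; auto.
    intros a Ha. apply in_in_remove. intro; subst; tauto. apply Hi; simpl; auto.
    exists F'. split; auto. split.
    + intro a. rewrite K2. split. intros [Ha Hb]. apply in_remove in Ha. simpl. destruct Ha. split; auto. intros [He|He]; [subst; tauto|tauto].
      intros [Ha Hb]. simpl in Hb. split. apply in_in_remove; [intro; subst; tauto|tauto]. tauto.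
    + intro P. rewrite (cnt_remove d P F t); auto. rewrite K3. simpl. lia. apply Hi; simpl; auto. Qed.

Fixpoint chain {N} (r : N -> N -> Prop) (x : N) (zs : list N) : Prop :=
  match zs with [] => True | y :: ys => r x y /\ chain r y ys end.
Fixpoint lastn {N} (x : N) (zs : list N) : N :=
  match zs with [] => x | y :: ys => lastn y ys end.

Lemma chain_snoc {N} (r : N -> N -> Prop) x zs y :
  chain r x zs -> r (lastn x zs) y -> chain r x (zs ++ [y]) /\ lastn x (zs ++ [y]) = y.
Proof. revert x; induction zs as [|z zs IH]; simpl; intros x Hc Hr. tauto.
  destruct Hc. destruct (IH z); auto. Qed.

Lemma chain_suffix {N} (r : N -> N -> Prop) ws y x :
  chain r y ws -> NoDup (y :: ws) -> In x (y :: ws) ->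
  exists ws', chain r x ws' /\ lastn x ws' = lastn y ws /\ NoDup (x :: ws').
Proof. revert y; induction ws as [|z ws IH]; intros y Hc Hn Hi.
  - destruct Hi as [<-|[]]. exists []; simpl; split; auto; split; auto; repeat constructor; simpl; tauto.
  - destruct Hi as [<-|Hi]. exists (z :: ws); split; [exact Hc|split; auto].
    inversion Hn; subst. destruct Hc. destruct (IH z) as [ws' ?]; auto. exists ws'; auto. Qed.

Lemma chain_short {N} (r : N -> N -> Prop) zs x :
  chain r x zs -> exists zs', chain r x zs' /\ lastn x zs' = lastn x zs /\ NoDup (x :: zs').
Proof. revert x; induction zs as [|y ys IH]; intros x Hc.
  - exists []. simpl. split; auto. split; auto. constructor; auto. constructor.
  - destruct Hc as [Hr Hc]. destruct (IH y Hc) as [zs'' [H1 [H2 H3]]].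
    destruct (classic (In x (y :: zs''))).
    + destruct (chain_suffix r zs'' y x) as [ws [? [? ?]]]; auto.
      exists ws. simpl. split; auto. split; congruence.
    + exists (y :: zs''). simpl. split; auto. split; auto. constructor; auto. Qed.
Lemma dec_true1 (P : Prop) : dec P = true -> P.
Proof. apply dec_true. Qed.
Section Main.
Variables (V A : Type) (tail head : A -> V) (k : nat)
  (Vs : nat -> V -> Prop) (As : nat -> A -> Prop) (w : V).

Definition ok (a : A) : Prop := forall i', i' < k -> ~ As i' a.
Definition eqdA (x y : A) : {x = y} + {x <> y} := excluded_middle_informative (x = y).
Definition inc (F : list A) (y : V) := cnt (fun a => head a = y) F.
Definition outc (F : list A) (y : V) := cnt (fun a => tail a = y) F.
Definition src (S : list (nat * V)) (y : V) := cnt (fun p : nat * V => snd p = y) S.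

Lemma walk_mono (P Q : A -> Prop) s es t :
  (forall a, P a -> Q a) -> walk tail head P s es t -> walk tail head Q s es t.
Proof. revert s; induction es; simpl; intros s H Hw; intuition. Qed.

Lemma walk_in (P : A -> Prop) s es t : walk tail head P s es t -> forall a, In a es -> P a.
Proof. revert s; induction es; simpl; intros s Hw b Hb. destruct Hb.
  destruct Hw as [? [? ?]]. destruct Hb; subst; eauto. Qed.

Lemma walk_mono_in (P : A -> Prop) s es t :
  walk tail head P s es t -> walk tail head (fun a => In a es) s es t.
Proof. revert s; induction es as [|e es IH]; simpl; intros s Hw; auto.
  destruct Hw as [? [? ?]]. split; auto. split; auto. eapply walk_mono; [|apply IH; eauto].
  simpl; auto. Qed.

Lemma trail_cons (P : A -> Prop) u T y :
  walk tail head P u T w -> y <> w -> inc T y + ind (u = y) = outc T y.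
Proof. unfold inc, outc. revert u; induction T as [|e T IH]; simpl; intros u Hw Hy.
  - subst. rewrite ind_F; auto.
  - destruct Hw as [_ [<- Hw]]. specialize (IH _ Hw Hy). lia. Qed.

Lemma trail_exists n : forall F u, length F <= n -> NoDup F ->
  (forall y, y <> w -> inc F y + ind (u = y) <= outc F y) ->
  exists T, walk tail head (fun a => In a F) u T w /\ NoDup T.
Proof. induction n as [|n IH]; intros F u Hl Hn Hc.
  - destruct (classic (u = w)). exists []. simpl; split; auto. constructor.
    specialize (Hc u H). destruct F; [|simpl in Hl; lia]. unfold inc, outc in Hc; simpl in Hc.
    rewrite ind_T in Hc; auto. lia.
  - destruct (classic (u = w)). exists []. simpl; split; auto. constructor.
    specialize (Hc u H) as Hu. rewrite ind_T in Hu; auto.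
    destruct (cnt_pos (fun a => tail a = u) F) as [e [He Ht]]. unfold outc in Hu; lia.
    set (F' := remove eqdA e F).
    assert (HF : forall P, cnt P F = cnt P F' + ind (P e)) by (intro; apply cnt_remove; auto).
    destruct (IH F' (head e)) as [T [HT HTn]].
    + pose proof (remove_length_lt eqdA F e He). fold F' in H0. lia.
    + apply NoDup_remove'; auto.
    + intros y Hy. specialize (Hc y Hy). unfold inc, outc in *.
      rewrite (HF (fun a => head a = y)) in Hc. rewrite (HF (fun a => tail a = y)) in Hc.
      rewrite Ht in Hc. lia.
    + exists (e :: T). split.
      * simpl. split; auto. split; auto. eapply walk_mono; [|exact HT].
        intros a Ha. apply in_remove in Ha. tauto.
      * constructor; auto. intro Hi. apply (walk_in _ _ _ _ HT) in Hi. apply (remove_In eqdA F e Hi).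
Qed.

Lemma decomp : forall S F, NoDup F -> (forall a, In a F -> ok a) ->
  (forall y, y <> w -> inc F y + src S y <= outc F y) ->
  exists L : list ((nat * V) * list A), map fst L = S /\ NoDup (concat (map snd L)) /\
    incl (concat (map snd L)) F /\
    forall p, In p L -> walk tail head ok (snd (fst p)) (snd p) w.
Proof. induction S as [|[i u] S IH]; intros F Hn Hok Hc.
  - exists []. simpl. repeat split; auto. constructor. intros a []. intros p [].
  - destruct (trail_exists (length F) F u) as [T [HT HTn]]; auto.
    { intros y Hy. specialize (Hc y Hy). unfold src in Hc. simpl in Hc. lia. }
    destruct (remove_all eqdA T F) as [F' [H1 [H2 H3]]]; auto.
    { intros a Ha. exact (walk_in _ _ _ _ HT a Ha). }
    destruct (IH F') as [L [E1 [E2 [E3 E4]]]]; auto.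
    { intros a Ha. apply Hok. apply H2 in Ha. tauto. }
    { intros y Hy. specialize (Hc y Hy). pose proof (trail_cons _ _ _ y HT Hy).
      unfold inc, outc, src in *. simpl in Hc.
      rewrite (H3 (fun a => head a = y)) in Hc. rewrite (H3 (fun a => tail a = y)) in Hc.
      simpl in Hc. lia. }
    exists (((i, u), T) :: L). simpl. split. congruence. split.
    + apply NoDup_app; auto. intros a Ha Hb. apply E3 in Hb. apply H2 in Hb. tauto.
    + split.
      * intros a Ha. apply in_app_or in Ha. destruct Ha. exact (walk_in _ _ _ _ HT a H).
        apply E3 in H. apply H2 in H. tauto.
      * intros p [<-|Hp]; auto. simpl. eapply walk_mono; [|exact HT]. auto.
Qed.

Definition SysOK (L : list ((nat * V) * list A)) : Prop :=
  (forall p, In p L -> fst (fst p) < k /\ Vs (fst (fst p)) (snd (fst p)) /\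
      walk tail head ok (snd (fst p)) (snd p) w) /\
  NoDup (map fst (map fst L)) /\ NoDup (concat (map snd L)).

Lemma sys_cons L : (forall p, In p L -> walk tail head ok (snd (fst p)) (snd p) w) ->
  forall y, y <> w -> inc (concat (map snd L)) y + src (map fst L) y = outc (concat (map snd L)) y.
Proof. induction L as [|p L IH]; intros H y Hy. reflexivity.
  simpl. unfold inc, outc, src in *. rewrite !cnt_app. simpl.
  pose proof (trail_cons _ _ _ y (H p (or_introl eq_refl)) Hy). unfold inc, outc in H0.
  specialize (IH (fun q Hq => H q (or_intror Hq)) y Hy). lia. Qed.

Definition rstep (F : list A) (S : list (nat * V)) (z z' : V + nat) : Prop :=
  match z, z' with
  | inl x, inl y => exists e, (ok e /\ ~ In e F /\ tail e = x /\ head e = y) \/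
                              (In e F /\ head e = x /\ tail e = y)
  | inl x, inr i => In (i, x) S
  | inr i, inl v => i < k /\ Vs i v
  | inr _, inr _ => False
  end.

Definition Base (F : list A) (S : list (nat * V)) : Prop :=
  NoDup F /\ (forall a, In a F -> ok a) /\ (forall i v, In (i, v) S -> i < k /\ Vs i v) /\
  NoDup (map fst S).

Definition Cons (z : V + nat) (F : list A) (S : list (nat * V)) : Prop :=
  match z with
  | inl x => forall y, y <> w -> inc F y + src S y = outc F y + ind (x = y)
  | inr i => (forall y, y <> w -> inc F y + src S y = outc F y) /\ i < k /\ ~ In i (map fst S)
  end.

Definition Agr (F0 : list A) (S0 : list (nat * V)) (z : V + nat) (zs : list (V + nat)) (F : list A) (S : list (nat * V)) : Prop :=
  (forall e, In (inl (tail e)) (z :: zs) -> In e F -> In e F0) /\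
  (forall e, In (inl (head e)) (z :: zs) -> In e F0 -> In e F) /\
  (forall j v, In (inr j) zs -> In (j, v) S0 -> In (j, v) S).

Definition remS (i : nat) (S : list (nat * V)) := filter (fun p => negb (dec (fst p = i))) S.

Lemma remS_cnt i x S : NoDup (map fst S) -> In (i, x) S ->
  forall P, cnt P S = cnt P (remS i S) + ind (P (i, x)).
Proof. induction S as [|p S IH]; intros Hn Hi P. destruct Hi.
  inversion Hn; subst. unfold remS; simpl. unfold dec at 1.
  destruct (excluded_middle_informative (fst p = i)) as [E|E]; simpl.
  - assert (Hp : p = (i, x)). { destruct Hi as [<-|Hi]; auto. exfalso. apply H1. rewrite E.
      apply (in_map fst) in Hi. exact Hi. }
    subst p. simpl in H1. assert (Hr : remS i S = S).
    { clear -H1. induction S as [|q S IH]; simpl; auto. simpl in H1. unfold remS; simpl. unfold dec at 1.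
      destruct (excluded_middle_informative (fst q = i)). tauto. simpl. f_equal. apply IH. tauto. }
    unfold remS in Hr. rewrite Hr. lia.
  - destruct Hi as [Hp|Hi]. subst p. simpl in E. tauto. rewrite (IH H2 Hi P). unfold remS. lia.
Qed.

Lemma remS_in i S j v : In (j, v) (remS i S) <-> In (j, v) S /\ j <> i.
Proof. unfold remS. rewrite filter_In. unfold dec. simpl.
  destruct (excluded_middle_informative (j = i)); simpl; intuition. Qed.

Lemma remS_nodup i S : NoDup (map fst S) -> NoDup (map fst (remS i S)).
Proof. induction S as [|p S IH]; simpl; intro H; auto. inversion H; subst.
  unfold remS; simpl. destruct (negb (dec (fst p = i))); simpl; auto.
  constructor; auto. intro Hi. apply H2. apply in_map_iff in Hi. destruct Hi as [q [<- Hq]].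
  apply filter_In in Hq. apply in_map. tauto. Qed.

Lemma remS_notin i S : ~ In i (map fst (remS i S)).
Proof. intro H. apply in_map_iff in H. destruct H as [[j v] [E H]]. simpl in E. subst.
  apply remS_in in H. tauto. Qed.

Lemma aug F0 S0 : forall zs z F S, chain (rstep F0 S0) z zs -> lastn z zs = inl w ->
  NoDup (z :: zs) -> Agr F0 S0 z zs F S -> Base F S -> Cons z F S ->
  exists F' S', Base F' S' /\ (forall y, y <> w -> inc F' y + src S' y <= outc F' y) /\
    length S' = length S + (match z with inl _ => 0 | inr _ => 1 end).
Proof.
  induction zs as [|z' zs IH]; intros z F S Hc Hl Hn [Ha1 [Ha2 Ha3]] Hb Hco.
  - simpl in Hl. subst z. exists F, S. split; auto. split; [|lia].
    intros y Hy. unfold Cons in Hco. rewrite (Hco y Hy). rewrite ind_F; [lia|intro; subst; auto].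
  - destruct Hc as [Hr Hc]. inversion Hn as [|? ? Hnz Hn']; subst. simpl in Hl.
    destruct Hb as [Hb1 [Hb2 [Hb3 Hb4]]].
    destruct z as [x|i]; destruct z' as [y|j]; unfold rstep in Hr; unfold Cons in Hco |- *.
    + destruct Hr as [e [[Hok [HnF [Ht Hh]]] | [HF [Hh Ht]]]].
      * assert (He : ~ In e F).
        { intro H. apply HnF. apply Ha1; auto. rewrite Ht; left; auto. }
        destruct (IH (inl y) (e :: F) S) as [F' [S' [H1 [H2 H3]]]]; auto.
        -- split; [|split].
           ++ intros e' Hi [<-|He']. exfalso. apply Hnz. rewrite <- Ht. exact Hi.
              apply Ha1; auto. right; auto.
           ++ intros e' Hi He'. right. apply Ha2; auto. right; auto.
           ++ intros j v Hj. apply Ha3. right; auto.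
        -- split. constructor; auto. split. intros a [<-|Ha]; auto. auto.
        -- simpl. intros y' Hy'. specialize (Hco y' Hy'). unfold inc, outc in *. simpl.
           rewrite Ht, Hh. lia.
        -- exists F', S'. split; [auto|split; [auto|lia]].
      * assert (He : In e F). { apply Ha2; auto. rewrite Hh; left; auto. }
        set (F1 := remove eqdA e F).
        assert (HF1 : forall P, cnt P F = cnt P F1 + ind (P e)) by (intro; apply cnt_remove; auto).
        destruct (IH (inl y) F1 S) as [F' [S' [H1 [H2 H3]]]]; auto.
        -- split; [|split].
           ++ intros e' Hi He'. apply in_remove in He'. apply Ha1; [right; auto|tauto].
           ++ intros e' Hi He'. apply in_in_remove. intro; subst e'. apply Hnz. rewrite <- Hh. exact Hi.
              apply Ha2; auto. right; auto.
           ++ intros j v Hj. apply Ha3. right; auto.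
        -- split. apply NoDup_remove'; auto. split. intros a Ha. apply in_remove in Ha. apply Hb2; tauto.
           auto.
        -- simpl. intros y' Hy'. specialize (Hco y' Hy'). unfold inc, outc in *.
           rewrite (HF1 (fun a => head a = y')) in Hco. rewrite (HF1 (fun a => tail a = y')) in Hco.
           rewrite Ht, Hh in Hco. lia.
        -- exists F', S'. split; [auto|split; [auto|lia]].
    + assert (HS : In (j, x) S). { apply Ha3; auto. left; auto. }
      destruct (Hb3 _ _ HS) as [Hjk _].
      pose proof (remS_cnt j x S Hb4 HS) as HR.
      destruct (IH (inr j) F (remS j S)) as [F' [S' [H1 [H2 H3]]]]; auto.
      -- split; [|split].
         ++ intros e' Hi He'. apply Ha1; [right; auto|auto].
         ++ intros e' Hi He'. apply Ha2; [right; auto|auto].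
         ++ intros j' v Hj Hv. apply remS_in. split. apply Ha3; [right; auto|auto].
            intro E; subst j'. inversion Hn' as [|? ? Hx _]; apply Hx; exact Hj.
      -- split; auto. split; auto. split. intros i v Hi. apply remS_in in Hi. apply Hb3; tauto.
         apply remS_nodup; auto.
      -- simpl. split; [|split; auto; apply remS_notin].
         intros y' Hy'. specialize (Hco y' Hy'). unfold inc, outc, src in *.
         rewrite (HR (fun p => snd p = y')) in Hco. simpl in Hco. lia.
      -- exists F', S'. split; [auto|split; [auto|]]. rewrite H3.
         pose proof (HR (fun _ => True)). rewrite !cnt_True in H. rewrite ind_T in H; auto. lia.
    + destruct Hco as [Hco [Hik Hni]]. destruct Hr as [_ Hv].
      destruct (IH (inl y) F ((i, y) :: S)) as [F' [S' [H1 [H2 H3]]]]; auto.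
      -- split; [|split].
         ++ intros e' Hi He'. apply Ha1; [right; auto|auto].
         ++ intros e' Hi He'. apply Ha2; [right; auto|auto].
         ++ intros j' v Hj Hv'. right. apply Ha3; [right; auto|auto].
      -- split; auto. split; auto. split.
         intros i' v [E|Hi]. inversion E; subst; auto. apply Hb3; auto.
         simpl. constructor; auto.
      -- simpl. intros y' Hy'. specialize (Hco y' Hy'). unfold inc, outc, src in *. simpl. lia.
      -- exists F', S'. split; [auto|split; [auto|]]. rewrite H3. simpl. lia.
    + destruct Hr.
Qed.

Lemma path_suffix (P : A -> Prop) es : forall x s t, is_path tail head P x es t ->
  In s (pverts head x es) -> exists es', is_path tail head P s es' t /\ incl es' es.
Proof. unfold is_path, pverts. induction es as [|e es IH]; intros x s t [Hw Hn] Hi.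
  - destruct Hi as [<-|[]]. exists []. simpl in *. split; [split; auto|]. intros a [].
  - destruct Hi as [<-|Hi]. exists (e :: es). split; [split; auto|]. intros a Ha; auto.
    destruct Hw as [_ [_ Hw]]. inversion Hn; subst.
    destruct (IH (head e) s t) as [es' [K1 K2]]; auto.
    exists es'. split; auto. intros a Ha. right; auto.
Qed.

Lemma walk_to_path (P : A -> Prop) es : forall s t, walk tail head P s es t ->
  exists es', is_path tail head P s es' t /\ incl es' es.
Proof. induction es as [|e es IH]; intros s t Hw.
  - exists []. split. split; auto. simpl. constructor; auto. constructor. intros a [].
  - destruct Hw as [He [Ht Hw]]. destruct (IH _ _ Hw) as [es2 [H1 H2]].
    destruct (classic (In s (pverts head (head e) es2))).
    + destruct (path_suffix P es2 (head e) s t H1 H) as [es3 [H3 H4]].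
      exists es3. split; auto. intros a Ha. right. apply H2, H4, Ha.
    + exists (e :: es2). split.
      * split. simpl. split; auto. split; auto. apply H1.
        unfold pverts. simpl. constructor; auto. apply H1.
      * intros a [<-|Ha]. left; auto. right; auto.
Qed.

Lemma last_vs (Q : V -> Prop) (P : A -> Prop) es : forall s t, is_path tail head P s es t ->
  (exists v, In v (pverts head s es) /\ Q v) ->
  exists s' es', is_path tail head P s' es' t /\ Q s' /\
    (forall v, In v (pverts head s' es') -> Q v -> v = s') /\ incl es' es.
Proof. induction es as [|e es IH]; intros s t Hp [v [Hv Hq]].
  - destruct Hv as [<-|[]]. exists s, []. split; auto. split; auto. split.
    intros v' [<-|[]]; auto. intros a [].
  - destruct Hp as [Hw Hn]. destruct Hw as [He [Ht Hw]]. unfold pverts in Hn. simpl in Hn.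
    inversion Hn; subst.
    destruct (classic (exists v, In v (pverts head (head e) es) /\ Q v)) as [Hex|Hnex].
    + destruct (IH (head e) t) as [s' [es' [K1 [K2 [K3 K4]]]]]; auto. split; auto.
      exists s', es'. split; auto. split; auto. split; auto. intros a Ha; right; auto.
    + exists (tail e), (e :: es). split. split. simpl; auto. unfold pverts; simpl; auto.
      split. destruct Hv as [<-|Hv]; auto. exfalso; apply Hnex; eauto.
      split. intros v' [<-|Hv'] Hq'; auto. exfalso; apply Hnex; eauto.
      intros a Ha; auto.
Qed.

Lemma per_trail (R : V -> Prop) (P : A -> Prop) T : forall u t, walk tail head P u T t ->
  (forall e, In e T -> R (head e) -> R (tail e)) ->
  cnt (fun a => R (tail a) /\ ~ R (head a)) T <= ind (R u).
Proof. induction T as [|e T IH]; intros u t Hw Hb; simpl. lia.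
  destruct Hw as [_ [Ht Hw]].
  specialize (IH (head e) t Hw (fun e' He' => Hb e' (or_intror He'))).
  destruct (classic (R u)) as [Hu|Hu].
  - rewrite (ind_T (R u)); auto. destruct (classic (R (head e))).
    + rewrite ind_F; [|tauto]. pose proof (ind_le1 (R (head e))). lia.
    + rewrite (ind_F (R (head e))) in IH; auto. pose proof (ind_le1 (R (tail e) /\ ~ R (head e))). lia.
  - rewrite (ind_F (R u)); auto. assert (~ R (head e)).
    { intro H. apply Hu. rewrite <- Ht. apply Hb; auto. left; auto. }
    rewrite (ind_F (R (head e))) in IH; auto. rewrite ind_F; [lia|]. rewrite Ht. tauto.
Qed.

Lemma sum_trail (RX : A -> Prop) (Ru : (nat * V) * list A -> Prop) L :
  (forall p, In p L -> cnt RX (snd p) <= ind (Ru p)) ->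
  cnt RX (concat (map snd L)) <= cnt Ru L.
Proof. induction L as [|p L IH]; simpl; intro H. lia. rewrite cnt_app.
  specialize (H p (or_introl eq_refl)) as Hp. specialize (IH (fun q Hq => H q (or_intror Hq))). lia. Qed.

Lemma nodup_map_filter {X Y} (f : X -> Y) (g : X -> bool) l :
  NoDup (map f l) -> NoDup (map f (filter g l)).
Proof. induction l as [|a l IH]; simpl; intro H; auto. inversion H; subst.
  destruct (g a); simpl; auto. constructor; auto. intro Hi. apply H2.
  apply in_map_iff in Hi. destruct Hi as [b [<- Hb]]. apply filter_In in Hb. apply in_map; tauto. Qed.

Definition Rnode (F0 : list A) (S0 : list (nat * V)) (z : V + nat) : Prop :=
  exists i0 zs, i0 < k /\ ~ In i0 (map fst S0) /\ chain (rstep F0 S0) (inr i0) zs /\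
     lastn (inr i0) zs = z.

Lemma Rnode_ext F0 S0 z z' : Rnode F0 S0 z -> rstep F0 S0 z z' -> Rnode F0 S0 z'.
Proof. intros [i0 [zs [H1 [H2 [H3 H4]]]]] Hr. subst z.
  destruct (chain_snoc _ _ _ _ H3 Hr). exists i0, (zs ++ [z']). auto. Qed.

Lemma step
  (Hcut : forall X : V -> Prop, (exists x, X x) ->
     indeg_ge tail head (fun a => forall i, i < k -> ~ As i a) X (count_missing k Vs X))
  L : SysOK L -> length L < k -> exists L', SysOK L' /\ length L' = S (length L).
Proof.
  intros [HL1 [HL2 HL3]] Hlen.
  set (F0 := concat (map snd L)). set (S0 := map fst L).
  assert (HF0ok : forall a, In a F0 -> ok a).
  { intros a Ha. apply in_concat in Ha. destruct Ha as [T [HT Ha]].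
    apply in_map_iff in HT. destruct HT as [p [<- Hp]].
    exact (walk_in _ _ _ _ (proj2 (proj2 (HL1 p Hp))) a Ha). }
  assert (HS0 : forall i v, In (i, v) S0 -> i < k /\ Vs i v).
  { intros i v H. apply in_map_iff in H. destruct H as [p [Hp HpL]].
    destruct (HL1 p HpL) as [? [? _]]. rewrite Hp in *. auto. }
  destruct (classic (Rnode F0 S0 (inl w))) as [[i0 [zs [Hi0 [Hni [Hc Hl]]]]] | HR].
  - destruct (chain_short _ _ _ Hc) as [zs' [Hc' [Hl' Hn']]]. rewrite Hl in Hl'.
    destruct (aug F0 S0 zs' (inr i0) F0 S0) as [F' [S' [HB [Hin Hlen']]]]; auto.
    + split; [|split]; auto.
    + split; auto.
    + unfold Cons. split; auto. intros y Hy. apply sys_cons; auto.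
      intros p Hp. apply (HL1 p Hp).
    + destruct HB as [HB1 [HB2 [HB3 HB4]]].
      destruct (decomp S' F') as [L' [E1 [E2 [E3 E4]]]]; auto.
      exists L'. split.
      * split; [|split]; auto.
        -- intros p Hp. assert (In (fst p) S') by (rewrite <- E1; apply in_map; auto).
           pose proof (E4 p Hp). destruct p as [[i v] T]. simpl in *.
           destruct (HB3 i v H). auto.
        -- rewrite E1. auto.
      * rewrite <- (length_map fst L'). rewrite E1. rewrite Hlen'. unfold S0. rewrite length_map. lia.
  - exfalso.
    set (R := fun v => Rnode F0 S0 (inl v)).
    destruct (Hcut (fun v => ~ R v)) as [l [Hln [Hll Hla]]]. exists w; auto.
    assert (Hb : forall e, In e F0 -> R (head e) -> R (tail e)).
    { intros e He Hr. apply (Rnode_ext _ _ _ _ Hr). exists e. right. auto. }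
    assert (Ha : forall a, In a l -> In a F0 /\ (R (tail a) /\ ~ R (head a))).
    { intros a Hal. destruct (Hla a Hal) as [Hok [Ht Hh]]. apply NNPP in Ht.
      split; [|split; auto]. apply NNPP. intro Hn. apply Hh.
      apply (Rnode_ext _ _ _ _ Ht). exists a. left. auto. }
    pose proof (NoDup_len_cnt _ _ _ Hln Ha) as C1.
    assert (C2 : cnt (fun a => R (tail a) /\ ~ R (head a)) F0 <= cnt (fun p => R (snd (fst p))) L).
    { apply sum_trail. intros p Hp. apply (per_trail R ok (snd p) (snd (fst p)) w).
      apply (HL1 p Hp). intros e He. apply Hb. apply in_concat. exists (snd p). split; auto.
      apply in_map; auto. }
    set (Miss := fun i => forall v, Vs i v -> ~ ~ R v).
    assert (Hcm : count_missing k Vs (fun v => ~ R v) = cnt Miss (seq 0 k)).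
    { unfold count_missing. apply filter_cnt. }
    set (M := map (fun p => fst (fst p)) (filter (fun p => dec (R (snd (fst p)))) L) ++
              filter (fun i => dec (~ In i (map fst S0))) (seq 0 k)).
    assert (HMl : length M = cnt (fun p => R (snd (fst p))) L + cnt (fun i => ~ In i (map fst S0)) (seq 0 k)).
    { unfold M. rewrite length_app, length_map. unfold dec. rewrite !filter_cnt. auto. }
    assert (HM : length M <= cnt Miss (seq 0 k)).
    { apply NoDup_len_cnt.
      - unfold M. apply NoDup_app.
        + apply nodup_map_filter.
          replace (map (fun p : (nat * V) * list A => fst (fst p)) L) with (map fst (map fst L)) by apply map_map.
          exact HL2.
        + apply NoDup_filter, seq_NoDup.
        + intros a H1 H2. apply filter_In in H2. destruct H2 as [_ H2]. apply dec_true1 in H2.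
          apply H2. apply in_map_iff in H1. destruct H1 as [p [<- Hp]]. apply filter_In in Hp.
          unfold S0. rewrite map_map. apply (in_map (fun x : (nat * V) * list A => fst (fst x))). tauto.
      - intros a HaM. unfold M in HaM. apply in_app_or in HaM. destruct HaM as [H1|H1].
        + apply in_map_iff in H1. destruct H1 as [p [<- Hp]]. apply filter_In in Hp.
          destruct Hp as [Hp Hr]. apply dec_true1 in Hr. destruct (HL1 p Hp) as [Hk [Hv _]].
          split. apply in_seq. lia.
          intros v Hv' Hn. apply Hn. apply (Rnode_ext _ _ (inr (fst (fst p)))).
          apply (Rnode_ext _ _ (inl (snd (fst p)))). exact Hr.
          simpl. unfold S0. apply in_map_iff. exists p. split; auto. destruct (fst p); auto.
          simpl. auto.
        + apply filter_In in H1. destruct H1 as [Hs Hu]. apply dec_true1 in Hu.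
          apply in_seq in Hs. split. apply in_seq. lia.
          intros v Hv Hn. apply Hn. exists a, [inl v]. simpl. repeat split; auto; lia. }
    assert (Hu : 1 <= cnt (fun i => ~ In i (map fst S0)) (seq 0 k)).
    { destruct (classic (exists i, In i (seq 0 k) /\ ~ In i (map fst S0))) as [[i [H1 H2]]|Hno].
      - apply (cnt_pos_of _ _ i); auto.
      - exfalso. assert (incl (seq 0 k) (map fst S0)).
        { intros i Hi. apply NNPP. intro; apply Hno; eauto. }
        apply (NoDup_incl_length (seq_NoDup k 0)) in H. rewrite length_seq in H.
        unfold S0 in H. rewrite !length_map in H. lia. }
    lia.
Qed.

Lemma concat_disj (L : list ((nat * V) * list A)) p1 p2 a :
  NoDup (concat (map snd L)) -> In p1 L -> In p2 L -> p1 <> p2 ->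
  In a (snd p1) -> In a (snd p2) -> False.
Proof. induction L as [|q L IH]; simpl; intros Hn H1 H2 Hne Ha1 Ha2. destruct H1.
  destruct H1 as [<-|H1]; destruct H2 as [<-|H2].
  - apply Hne; auto.
  - apply (NoDup_app_disj _ _ a Hn Ha1). apply in_concat. exists (snd p2). split; auto. apply in_map; auto.
  - apply (NoDup_app_disj _ _ a Hn Ha2). apply in_concat. exists (snd p1). split; auto. apply in_map; auto.
  - apply NoDup_app_remove_l in Hn. eauto.
Qed.

Section WithCut.
Hypothesis Hcut : forall X : V -> Prop, (exists x, X x) ->
     indeg_ge tail head (fun a => forall i, i < k -> ~ As i a) X (count_missing k Vs X).

Lemma build n : n <= k -> exists L, SysOK L /\ length L = n.
Proof. induction n as [|n IH]; intro Hn.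
  - exists []. split; auto. split. intros p []. split; simpl; constructor.
  - destruct IH as [L [HL Hl]]. lia. destruct (step Hcut L HL) as [L' [? ?]]. lia.
    exists L'. split; auto. lia.
Qed.

Lemma final : exists P : nat -> V * list A,
    (forall i, i < k ->
       is_path tail head ok (fst (P i)) (snd (P i)) w /\
       Vs i (fst (P i)) /\
       (forall v, In v (pverts head (fst (P i)) (snd (P i))) -> Vs i v -> v = fst (P i))) /\
    (forall i j, i < k -> j < k -> i <> j ->
       forall a, In a (snd (P i)) -> In a (snd (P j)) -> False).
Proof.
  destruct (build k (le_n k)) as [L [[HL1 [HL2 HL3]] Hl]].
  assert (Hall : incl (seq 0 k) (map fst (map fst L))).
  { apply NoDup_length_incl; auto. rewrite !length_map, length_seq. lia.
    intros i Hi. apply in_map_iff in Hi. destruct Hi as [x [<- Hx]]. apply in_map_iff in Hx.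
    destruct Hx as [p [<- Hp]]. apply in_seq. destruct (HL1 p Hp). lia. }
  assert (H : forall i, exists q : V * list A, i < k ->
    (is_path tail head ok (fst q) (snd q) w /\ Vs i (fst q) /\
       (forall v, In v (pverts head (fst q) (snd q)) -> Vs i v -> v = fst q)) /\
    exists p, In p L /\ fst (fst p) = i /\ incl (snd q) (snd p)).
  { intro i. destruct (Nat.lt_ge_cases i k) as [Hi|Hi].
    - assert (In i (map fst (map fst L))) by (apply Hall, in_seq; lia).
      rewrite map_map in H. apply in_map_iff in H. destruct H as [p [Hpi Hp]].
      destruct (HL1 p Hp) as [_ [Hv Hw]]. rewrite Hpi in Hv.
      destruct (walk_to_path _ _ _ _ Hw) as [es [Hpath Hinc]].
      destruct (last_vs (Vs i) ok es _ _ Hpath) as [s' [es' [H1 [H2 [H3 H4]]]]].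
      { exists (snd (fst p)). split; auto. left; auto. }
      exists (s', es'). intros _. simpl. split; auto. exists p. split; auto. split; auto.
      intros a Ha. apply Hinc, H4, Ha.
    - exists (w, []). intro; lia. }
  exists (fun i => proj1_sig (constructive_indefinite_description _ (H i))). split.
  - intros i Hi. destruct (constructive_indefinite_description _ (H i)) as [q Hq]. simpl.
    apply (Hq Hi).
  - intros i j Hi Hj Hij a Ha1 Ha2.
    destruct (constructive_indefinite_description _ (H i)) as [q1 Hq1].
    destruct (constructive_indefinite_description _ (H j)) as [q2 Hq2]. simpl in *.
    destruct (Hq1 Hi) as [_ [p1 [Hp1 [E1 I1]]]].
    destruct (Hq2 Hj) as [_ [p2 [Hp2 [E2 I2]]]].
    apply (concat_disj L p1 p2 a HL3 Hp1 Hp2); auto. intro; subst. congruence.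
Qed.
End WithCut.
End Main.

Theorem proposition3 (V A : Type) (tail head : A -> V) (k : nat)
  (Vs : nat -> V -> Prop) (As : nat -> A -> Prop)
  (Hbr : forall i, i < k -> is_branching tail head (Vs i) (As i))
  (Hdisj : forall i j, i < k -> j < k -> i <> j -> forall a, As i a -> As j a -> False)
  (Hcut : forall X : V -> Prop, (exists x, X x) ->
     indeg_ge tail head (fun a => forall i, i < k -> ~ As i a) X (count_missing k Vs X)) :
  forall w : V, exists P : nat -> V * list A,
    (forall i, i < k ->
       is_path tail head (fun a => forall i', i' < k -> ~ As i' a) (fst (P i)) (snd (P i)) w /\
       Vs i (fst (P i)) /\
       (forall v, In v (pverts head (fst (P i)) (snd (P i))) -> Vs i v -> v = fst (P i))) /\
    (forall i j, i < k -> j < k -> i <> j ->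
       forall a, In a (snd (P i)) -> In a (snd (P j)) -> False).
Proof.
  intro w. exact (final V A tail head k Vs As w Hcut).
Qed.
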